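(* Let $R$ be an integral domain with field of fractions $F$, $A$ a unital $R$-algebra, $P$ a right $A$-module, and $N_1\subseteq N_2$ left $A$-modules with inclusion $\iota:N_1\to N_2$. Suppose that $A\otimes_RF$ is semisimple and that $N_2$ and $P\otimes_AN_1$ are free $R$-modules. Then $\mathrm{id}_P\otimes\iota:P\otimes_AN_1\to P\otimes_AN_2$ is injective. *)

(* Defs.v *)
From HB Require Import structures.
From mathcomp Require Import all_boot all_order all_algebra.
Set Implicit Arguments. Unset Strict Implicit. Unset Printing Implicit Defensive.
Import Order.TTheory GRing.Theory Num.Theory.
Local Open Scope ring_scope.

(* Right multiplication on a right A-module, modelled as a left A^c-module. *)
Definition rmul (A : pzRingType) (P : lmodType A^c) (p : P) (a : A) : P :=
  @GRing.scale (A^c) P a p.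

Definition balanced (A : pzRingType) (P : lmodType A^c) (N : lmodType A)
  (U : zmodType) (b : P -> N -> U) : Prop :=
  [/\ (forall p p' n, b (p + p') n = b p n + b p' n),
      (forall p n n', b p (n + n') = b p n + b p n') &
      (forall p a n, b (rmul p a) n = b p (a *: n))].

(* (T, t) is a tensor product P (x)_A N, characterised by its universal
   property among abelian groups. *)
Definition is_tensorA (A : pzRingType) (P : lmodType A^c) (N : lmodType A)
  (T : zmodType) (t : P -> N -> T) : Prop :=
  [/\ balanced t,
      (forall (U : zmodType) (g : P -> N -> U), balanced g ->
         exists h : T -> U, {morph h : x y / x + y} /\
                            forall p n, h (t p n) = g p n) &
      (forall (U : zmodType) (h1 h2 : T -> U),
         {morph h1 : x y / x + y} -> {morph h2 : x y / x + y} ->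
         (forall p n, h1 (t p n) = h2 (t p n)) -> h1 =1 h2)].

Definition free_wrt (R : pzRingType) (M : zmodType) (s : R -> M -> M) : Prop :=
  exists (I : eqType) (e : I -> M),
    (forall x : M, exists (l : seq I) (c : I -> R),
        x = \sum_(i <- l) s (c i) (e i)) /\
    (forall (l : seq I) (c : I -> R), uniq l ->
        \sum_(i <- l) s (c i) (e i) = 0 -> forall i, i \in l -> c i = 0).

(* R-bilinear maps A x F -> U, where A is an R-algebra via phi and F is the
   fraction field of R. *)
Definition R_bilinear (R : idomainType) (A : pzRingType) (phi : R -> A)
  (U : zmodType) (b : A -> {fraction R} -> U) : Prop :=
  [/\ (forall a a' f, b (a + a') f = b a f + b a' f),
      (forall a f f', b a (f + f') = b a f + b a f') &
      (forall r a f, b (phi r * a) f = b a (tofrac r * f))].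

(* (B, t) is the ring A (x)_R F: the tensor product (universal among abelian
   groups for R-bilinear maps), with the ring structure
   (a (x) f)(a' (x) f') = aa' (x) ff', 1 = 1 (x) 1. *)
Definition is_tensor_frac_ring (R : idomainType) (A : pzRingType) (phi : R -> A)
  (B : pzRingType) (t : A -> {fraction R} -> B) : Prop :=
  [/\ R_bilinear phi t,
      (forall (U : zmodType) (g : A -> {fraction R} -> U), R_bilinear phi g ->
         exists h : B -> U, {morph h : x y / x + y} /\
                            forall a f, h (t a f) = g a f),
      (forall (U : zmodType) (h1 h2 : B -> U),
         {morph h1 : x y / x + y} -> {morph h2 : x y / x + y} ->
         (forall a f, h1 (t a f) = h2 (t a f)) -> h1 =1 h2),
      (forall a a' f f', t a f * t a' f' = t (a * a') (f * f')) &
      t 1 1 = 1].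

Definition left_ideal (B : pzRingType) (L : B -> Prop) : Prop :=
  [/\ L 0, (forall x y, L x -> L y -> L (x + y)) &
      (forall a x, L x -> L (a * x))].

Definition semisimple_ring (B : pzRingType) : Prop :=
  forall L : B -> Prop, left_ideal L ->
    exists L' : B -> Prop, [/\ left_ideal L',
      (forall x, L x -> L' x -> x = 0) &
      (forall x, exists y z, [/\ L y, L' z & x = y + z])].

(* Main.v *)
Require Import Defs.
From HB Require Import structures.
From mathcomp Require Import all_boot all_order all_algebra.
From mathcomp Require Import ring boolp classical_sets.
Set Implicit Arguments. Unset Strict Implicit. Unset Printing Implicit Defensive.
Import Order.TTheory GRing.Theory Num.Theory.
Local Open Scope ring_scope.
Local Open Scope quotient_scope.

Lemma fracE (R : idomainType) (x : {ratio R}) :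
  \pi_{fraction R} x = tofrac \n_x / tofrac \d_x.
Proof.
apply: (@mulIf _ (tofrac \d_x)); first by rewrite tofrac_eq0 denom_ratioP.
rewrite mulfVK ?tofrac_eq0 ?denom_ratioP //.
unlock tofrac. rewrite -[_ * _]/(FracField.mul _ _) !piE.
apply/eqmodP; rewrite /= FracField.equivfE /FracField.mulf !numden_Ratio ?mulf_neq0 ?denom_ratioP ?oner_neq0 //.
by rewrite !mulr1 mulrC.
Qed.

Lemma frac_repr (R : idomainType) (f : {fraction R}) :
  f = tofrac \n_(repr f) / tofrac \d_(repr f).
Proof. by rewrite -fracE reprK. Qed.

Lemma frac_eq (R : idomainType) (n d n' d' : R) : d != 0 -> d' != 0 ->
  tofrac n / tofrac d = tofrac n' / tofrac d' :> {fraction R} -> n * d' = n' * d.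
Proof.
move=> d0 d'0 e; apply/eqP; rewrite -tofrac_eq !tofracM.
have hd : tofrac d != 0 :> {fraction R} by rewrite tofrac_eq0.
have hd' : tofrac d' != 0 :> {fraction R} by rewrite tofrac_eq0.
by rewrite -eqr_div // e.
Qed.

Section FieldLemmas.
Variable F : fieldType.
Implicit Types x y z : F.
Lemma G1 x y z : x != 0 -> y != 0 -> z != 0 -> (x*z) / (x*y*z) = y^-1.
Proof. by move=> hx hy hz; field; rewrite hx hy hz. Qed.
Lemma G2 x y z : x != 0 -> y != 0 -> z != 0 -> (x*y) / (x*y*z) = z^-1.
Proof. by move=> hx hy hz; field; rewrite hx hy hz. Qed.
Lemma G3 y z : y != 0 -> z != 0 -> z / (y*z) = y^-1.
Proof. by move=> hy hz; field; rewrite hy hz. Qed.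
Lemma G4 y z : y != 0 -> z != 0 -> y / (y*z) = z^-1.
Proof. by move=> hy hz; field; rewrite hy hz. Qed.
Lemma G5 x y x' y' : y != 0 -> y' != 0 -> x / y + x' / y' = (x*y'+x'*y)/(y*y').
Proof. by move=> hy hy'; field; rewrite hy hy'. Qed.
End FieldLemmas.

Section Loc.
Variables (R : idomainType) (A : pzRingType) (phi : {rmorphism R -> A}).
Hypothesis phi_central : forall r a, phi r * a = a * phi r.

Definition sc (r : R) (a : A) := phi r * a.
Lemma scM r r' a : sc r (sc r' a) = sc (r * r') a.
Proof. by rewrite /sc rmorphM mulrA. Qed.
Lemma scDr r a b : sc r (a + b) = sc r a + sc r b.
Proof. by rewrite /sc mulrDr. Qed.
Lemma scDl r r' a : sc (r + r') a = sc r a + sc r' a.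
Proof. by rewrite /sc rmorphD mulrDl. Qed.
Lemma scNr r a : sc r (- a) = - sc r a.
Proof. by rewrite /sc mulrN. Qed.
Lemma sc0r r : sc r 0 = 0. Proof. by rewrite /sc mulr0. Qed.
Lemma sc1 a : sc 1 a = a. Proof. by rewrite /sc rmorph1 mul1r. Qed.
Lemma scC r r' a : sc r (sc r' a) = sc r' (sc r a).
Proof. by rewrite !scM mulrC. Qed.
Lemma scE r r' a : r = r' -> sc r a = sc r' a. Proof. by move->. Qed.

Definition nz (s : R) := if s == 0 then 1 else s.
Lemma nz_neq0 s : nz s != 0.
Proof. rewrite /nz; have [_|//] := eqVneq s 0; exact: oner_neq0. Qed.
Lemma nz_id s : s != 0 -> nz s = s.
Proof. by rewrite /nz => /negbTE ->. Qed.

Definition eqvP (p q : A * R) :=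
  exists u, u != 0 /\ sc u (sc (nz q.2) p.1) = sc u (sc (nz p.2) q.1).
Definition eqv (p q : A * R) : bool := `[< eqvP p q >].

Lemma eqv_refl : reflexive eqv.
Proof. by move=> p; apply/asboolP; exists 1; rewrite oner_neq0. Qed.
Lemma eqv_sym : symmetric eqv.
Proof.
by move=> p q; apply/asboolP/asboolP => -[u [u0 e]]; exists u; split.
Qed.
Lemma eqv_trans : transitive eqv.
Proof.
move=> [a2 s2] [a1 s1] [a3 s3] /asboolP [u [u0 /= e1]] /asboolP [v [v0 /= e2]].
apply/asboolP; exists (u * v * nz s2); split; first by rewrite !mulf_neq0 ?nz_neq0.
rewrite /= (_ : sc _ (sc _ a1) = sc (v * nz s3) (sc u (sc (nz s2) a1))); last first.
  by rewrite !scM; apply: scE; ring.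
rewrite e1 (_ : sc _ (sc _ (sc _ a2)) = sc (u * nz s1) (sc v (sc (nz s3) a2))); last first.
  by rewrite !scM; apply: scE; ring.
rewrite e2 !scM; apply: scE; ring.
Qed.

Canonical eqv_equiv := EquivRel eqv eqv_refl eqv_sym eqv_trans.

Definition M := {eq_quot eqv}.
HB.instance Definition _ : EqQuotient _ eqv M := EqQuotient.on M.
HB.instance Definition _ := Choice.on M.

Lemma eqv_pi p q : eqvP p q -> \pi_M p = \pi_M q.
Proof. by move=> h; apply/eqmodP; apply/asboolP. Qed.
Lemma pi_eqv p q : \pi_M p = \pi_M q -> eqvP p q.
Proof. by move/eqmodP/asboolP. Qed.

Definition addp (p q : A * R) : A * R :=
  (sc (nz q.2) p.1 + sc (nz p.2) q.1, nz p.2 * nz q.2).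
Definition oppp (p : A * R) : A * R := (- p.1, p.2).

Lemma nzM s s' : nz (nz s * nz s') = nz s * nz s'.
Proof. by rewrite nz_id // mulf_neq0 ?nz_neq0. Qed.

Lemma nzMr s t w : nz (nz s * (nz t * nz w)) = nz s * (nz t * nz w).
Proof. by rewrite nz_id // !mulf_neq0 ?nz_neq0. Qed.
Lemma nzMl s t w : nz (nz s * nz t * nz w) = nz s * nz t * nz w.
Proof. by rewrite nz_id // !mulf_neq0 ?nz_neq0. Qed.

Lemma addp_compat p p' q : eqvP p p' -> eqvP (addp p q) (addp p' q).
Proof.
case: p p' q => [a s] [a' s'] [b t] [u [u0 /= e]]; exists u; split => //=.
rewrite !nzM !scDr !scM.
congr (_ + _).
  have -> : sc (u * (nz s' * nz t) * nz t) a = sc (nz t * nz t) (sc u (sc (nz s') a)).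
    by rewrite !scM; apply: scE; ring.
  rewrite e !scM; apply: scE; ring.
apply: scE; ring.
Qed.

Lemma addpC p q : addp p q = addp q p.
Proof. by rewrite /addp addrC mulrC. Qed.

Lemma oppp_compat p p' : eqvP p p' -> eqvP (oppp p) (oppp p').
Proof.
case: p p' => [a s] [a' s'] [u [u0 /= e]]; exists u; split => //=.
by rewrite !scNr e.
Qed.

Definition addM (x y : M) : M := locked (\pi_M (addp (repr x) (repr y))).
Definition oppM (x : M) : M := locked (\pi_M (oppp (repr x))).
Definition zeroM : M := \pi_M (0, 1).

Lemma addp_compat2 p p' q q' : eqvP p p' -> eqvP q q' -> eqvP (addp p q) (addp p' q').
Proof.
move=> h1 h2; apply/asboolP; apply: (@eqv_trans (addp p' q)).
  exact/asboolP/addp_compat.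
by rewrite addpC (addpC p'); apply/asboolP/addp_compat.
Qed.

Lemma repr_eqv p : eqvP (repr (\pi_M p)) p.
Proof. exact: pi_eqv (reprK _). Qed.

Lemma pi_addM p q : addM (\pi_M p) (\pi_M q) = \pi_M (addp p q).
Proof. by rewrite /addM -lock; apply: eqv_pi; apply: addp_compat2; apply: repr_eqv. Qed.

Lemma pi_oppM p : oppM (\pi_M p) = \pi_M (oppp p).
Proof. by rewrite /oppM -lock; apply: eqv_pi; apply: oppp_compat; apply: repr_eqv. Qed.

Lemma addMA : associative addM.
Proof.
elim/quotW=> [[a s]]; elim/quotW=> [[b t]]; elim/quotW=> [[c w]].
rewrite !pi_addM; apply: eqv_pi; exists 1; split; first exact: oner_neq0.
rewrite /= ?nzM ?nzMr ?nzMl !scDr !scM -!addrA.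
congr (_ + _); [|congr (_ + _)]; apply: scE; ring.
Qed.

Lemma addMC : commutative addM.
Proof. by elim/quotW=> p; elim/quotW=> q; rewrite !pi_addM addpC. Qed.

Lemma add0M : left_id zeroM addM.
Proof.
elim/quotW=> [[a s]]; rewrite /zeroM pi_addM; apply: eqv_pi; exists 1.
split; first exact: oner_neq0.
rewrite /= sc0r add0r (nz_id (oner_neq0 R)) mul1r (nz_id (nz_neq0 s)) !sc1 //.
Qed.

Lemma addNM : left_inverse zeroM oppM addM.
Proof.
elim/quotW=> [[a s]]; rewrite /zeroM pi_oppM pi_addM; apply: eqv_pi; exists 1.
split; first exact: oner_neq0.
by rewrite /= scNr addNr !sc0r.
Qed.

HB.instance Definition _ := GRing.isZmodule.Build M addMA addMC add0M addNM.


Lemma pi_add p q : \pi_M p + \pi_M q = \pi_M (addp p q).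
Proof. exact: pi_addM. Qed.
Lemma pi_zero : 0 = \pi_M (0, 1).
Proof. by []. Qed.

Variables (B : pzRingType) (tB : A -> {fraction R} -> B).
Hypothesis tBt : is_tensor_frac_ring phi tB.

Lemma tB_addl a a' f : tB (a + a') f = tB a f + tB a' f.
Proof. by case: tBt => [[]]. Qed.
Lemma tB_addr a f f' : tB a (f + f') = tB a f + tB a f'.
Proof. by case: tBt => [[]]. Qed.
Lemma tB_bal r a f : tB (phi r * a) f = tB a (tofrac r * f).
Proof. by case: tBt => [[]]. Qed.
Lemma tB_mul a a' f f' : tB a f * tB a' f' = tB (a * a') (f * f').
Proof. by case: tBt. Qed.
Lemma tB_one : tB 1 1 = 1.
Proof. by case: tBt. Qed.
Lemma tB0l f : tB 0 f = 0.
Proof. by apply: (@addrI _ (tB 0 f)); rewrite -tB_addl !addr0. Qed.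

Definition gM (a : A) (f : {fraction R}) : M :=
  \pi_M (sc \n_(repr f) a, \d_(repr f)).

Lemma gM_repr a f n d : d != 0 -> f = tofrac n / tofrac d ->
  gM a f = \pi_M (sc n a, d).
Proof.
move=> d0 fE; apply: eqv_pi; exists 1; split; first exact: oner_neq0.
have := frac_eq (denom_ratioP _) d0 (etrans (esym (frac_repr f)) fE).
rewrite /= !nz_id ?denom_ratioP // !scM => e; apply: scE.
by rewrite !mul1r mulrC e mulrC.
Qed.

Lemma tofrac_neq0 (d : R) : d != 0 -> tofrac d != 0 :> {fraction R}.
Proof. by rewrite tofrac_eq0. Qed.

Lemma gM_bil : R_bilinear phi gM.
Proof.
split.
- move=> a a' f; have fE := frac_repr f.
  set n := \n_ _ in fE; set d := \d_ _ in fE.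
  have d0 : d != 0 by exact: denom_ratioP.
  rewrite !(@gM_repr _ f n d) // pi_add; apply: eqv_pi; exists 1.
  split; first exact: oner_neq0.
  by rewrite /= !nz_id ?mulf_neq0 // !scDr !scM; congr (_ + _); apply: scE; ring.
- move=> a f f'; have fE := frac_repr f; have f'E := frac_repr f'.
  set n := \n_ (repr f) in fE; set d := \d_ (repr f) in fE.
  set n' := \n_ (repr f') in f'E; set d' := \d_ (repr f') in f'E.
  have d0 : d != 0 by exact: denom_ratioP.
  have d'0 : d' != 0 by exact: denom_ratioP.
  rewrite (@gM_repr _ _ (n * d' + n' * d) (d * d')) ?mulf_neq0 //; last first.
    by rewrite fE f'E tofracD !tofracM G5 // tofrac_neq0.
  rewrite (@gM_repr _ f n d) // (@gM_repr _ f' n' d') // pi_add; apply: eqv_pi; exists 1.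
  split; first exact: oner_neq0.
  by rewrite /= !nz_id ?mulf_neq0 // !scDl !scDr !scM; congr (_ + _); apply: scE; ring.
- move=> r a f; have fE := frac_repr f.
  set n := \n_ _ in fE; set d := \d_ _ in fE.
  have d0 : d != 0 by exact: denom_ratioP.
  rewrite [RHS](@gM_repr a _ (r * n) d) //; last by rewrite tofracM -mulrA -fE.
  by rewrite (@gM_repr _ f n d) // [sc n _]scM mulrC.
Qed.
 

Definition kM (x : M) : B := tB (repr x).1 (tofrac (nz (repr x).2))^-1.

Lemma kM_compat p q : eqvP p q ->
  tB p.1 (tofrac (nz p.2))^-1 = tB q.1 (tofrac (nz q.2))^-1.
Proof.
case: p q => [a s] [a' s'] [u [u0 /= e]].
have hs := tofrac_neq0 (nz_neq0 s); have hs' := tofrac_neq0 (nz_neq0 s').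
have hu := tofrac_neq0 u0.
transitivity (tB (sc u (sc (nz s') a)) (tofrac (u * nz s * nz s'))^-1).
  by rewrite scM /sc tB_bal !tofracM G1.
by rewrite e scM /sc tB_bal !tofracM G2.
Qed.

Lemma kM_pi p : kM (\pi_M p) = tB p.1 (tofrac (nz p.2))^-1.
Proof. exact/kM_compat/repr_eqv. Qed.

Lemma kM_add : {morph kM : x y / x + y}.
Proof.
elim/quotW=> [[a s]]; elim/quotW=> [[b t]]; rewrite pi_add !kM_pi /= nzM.
have hs := tofrac_neq0 (nz_neq0 s); have ht := tofrac_neq0 (nz_neq0 t).
by rewrite tB_addl /sc !tB_bal !tofracM G3 // G4.
Qed.

Lemma kM_g a f : kM (gM a f) = tB a f.
Proof.
rewrite /gM kM_pi /= nz_id ?denom_ratioP // /sc tB_bal; congr tB.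
by rewrite [in RHS](frac_repr f) mulrC.
Qed.

Lemma B_pure (beta : B) :
  exists a s, s != 0 /\ beta = tB a (tofrac s)^-1.
Proof.
case: tBt => _ ex uniq _ _; have [h [hadd hg]] := ex M gM gM_bil.
have e : kM (h beta) = beta.
  apply: (uniq B (fun x => kM (h x)) id) => //.
  - by move=> x y; rewrite hadd kM_add.
  - by move=> a f; rewrite hg kM_g.
rewrite -e; elim/quotW: (h beta) => p; rewrite kM_pi.
by exists p.1, (nz p.2); split => //; exact: nz_neq0.
Qed.

Lemma B_tors (c : A) : tB c 1 = 0 -> exists u, u != 0 /\ phi u * c = 0.
Proof.
case: tBt => _ ex _ _ _ e; have [h [hadd hg]] := ex M gM gM_bil.
have h0 : h 0 = 0 by apply: (@addrI _ (h 0)); rewrite -hadd !addr0.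
have : gM c 1 = \pi_M (0, 1).
  rewrite -hg e h0 //.
rewrite (@gM_repr _ _ 1 1) ?oner_neq0 ?tofrac1 ?divr1 // => /pi_eqv [u [u0]].
rewrite /= !nz_id ?oner_neq0 // !sc1 sc0r => e'; exists u; split => //.
Qed.

End Loc.

Section Baer.
Variables (R : idomainType) (A : pzRingType) (phi : {rmorphism R -> A}).
Hypothesis phi_central : forall r a, phi r * a = a * phi r.
Variable (P : lmodType A^c).
Variables (B : pzRingType) (tB : A -> {fraction R} -> B).
Hypothesis tBt : is_tensor_frac_ring phi tB.
Hypothesis Bss : semisimple_ring B.

Local Notation F := {fraction R}.

Definition inD (d : P -> F) :=
  (forall p p', d (p + p') = d p + d p') /\
  (forall r p, d (rmul p (phi r)) = tofrac r * d p).

Lemma inD0 d : inD d -> d 0 = 0.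
Proof. by case=> h _; apply: (@addrI _ (d 0)); rewrite -h !addr0. Qed.

Lemma rmul_mul (p : P) (a b : A) : rmul (rmul p a) b = rmul p (a * b).
Proof. by rewrite /rmul scalerA. Qed.
Lemma rmulDr (p p' : P) (a : A) : rmul (p + p') a = rmul p a + rmul p' a.
Proof. by rewrite /rmul scalerDr. Qed.
Lemma rmulDl (p : P) (a b : A) : rmul p (a + b) = rmul p a + rmul p b.
Proof. by rewrite /rmul scalerDl. Qed.
Lemma rmul0 (p : P) : rmul p 0 = 0.
Proof. by rewrite /rmul scale0r. Qed.
Lemma rmul1 (p : P) : rmul p 1 = p.
Proof. by rewrite /rmul scale1r. Qed.

Lemma inDN d p : inD d -> d (- p) = - d p.
Proof.
move=> hd; apply: (@addrI _ (d p)); rewrite -hd.1 !subrr; exact: inD0 hd.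
Qed.

Lemma inD_act d a : inD d -> inD (fun p => d (rmul p a)).
Proof.
move=> [h1 h2]; split=> [p p'|r p]; first by rewrite rmulDr h1.
by rewrite rmul_mul phi_central -rmul_mul h2.
Qed.

Lemma inD_add d d' : inD d -> inD d' -> inD (fun p => d p + d' p).
Proof.
move=> [h1 h2] [h1' h2']; split=> [p p'|r p]; first by rewrite h1 h1' addrACA.
by rewrite h2 h2' mulrDr.
Qed.

Lemma inD_sc d c : inD d -> inD (fun p => c * d p).
Proof.
move=> [h1 h2]; split=> [p p'|r p]; first by rewrite h1 mulrDr.
by rewrite h2 mulrCA.
Qed.

Lemma tBN a f : tB (- a) f = - tB a f.
Proof.
apply: (@addrI _ (tB a f)); rewrite -(tB_addl tBt) !subrr; exact: (tB0l tBt).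
Qed.

Lemma baer (L : A -> Prop) (psi : A -> P -> F) :
  L 0 -> (forall x y, L x -> L y -> L (x + y)) ->
  (forall a x, L x -> L (a * x)) ->
  (forall b, L b -> inD (psi b)) ->
  (forall b b', L b -> L b' -> forall p, psi (b + b') p = psi b p + psi b' p) ->
  (forall a b, L b -> forall p, psi (a * b) p = psi b (rmul p a)) ->
  exists d, inD d /\ forall b, L b -> forall p, psi b p = d (rmul p b).
Proof.
move=> L0 LD LM psiD psiA psiM.
pose LB (beta : B) := exists b s, [/\ L b, s != 0 & beta = tB b (tofrac s)^-1].
have LBi : left_ideal LB.
  split.
  - exists 0, 1; split => //; first exact: oner_neq0.
    by rewrite (tB0l tBt).
  - move=> x y [b [s [Lb s0 ->]]] [b' [s' [Lb' s'0 ->]]].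
    exists (phi s' * b + phi s * b'), (s * s'); split.
    + by apply: LD; apply: LM.
    + by rewrite mulf_neq0.
    by rewrite (tB_addl tBt) !(tB_bal tBt) !tofracM G3 ?tofrac_neq0 // G4 ?tofrac_neq0.
  - move=> a x [b [s [Lb s0 ->]]].
    have [a' [t [t0 ->]]] := B_pure tBt a.
    exists (a' * b), (t * s); split; first exact: LM.
      by rewrite mulf_neq0.
    by rewrite (tB_mul tBt) tofracM invfM.
have [L' [L'i disj dec]] := Bss LBi.
have [y [z [[a0 [s0 [La0 s00 ye]]] L'z e1]]] := dec 1.
have hs0 := tofrac_neq0 s00.
exists (fun p => (tofrac s0)^-1 * psi a0 p).
split; first exact: inD_sc (psiD _ La0).
move=> b Lb p.
have Lba0 : L (b * a0) by exact: LM.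
pose c := phi s0 * b + (-1) * (b * a0).
have Ls0b : L (phi s0 * b) by exact: LM.
have Lm : L ((-1) * (b * a0)) by exact: LM.
have Lc : L c by exact: LD.
case: L'i => _ _ L'M.
have tc0 : tB c (tofrac s0)^-1 = 0.
  apply: disj; first by exists c, s0.
  have -> : tB c (tofrac s0)^-1 = tB b 1 * z.
    have -> : z = 1 - y by rewrite e1 addrC addKr.
    rewrite mulrBr mulr1 ye (tB_mul tBt) mul1r (tB_addl tBt) (tB_bal tBt).
    by rewrite mulfV // mulN1r tBN.
  exact: L'M.
have tc1 : tB c 1 = 0.
  have := tB_mul tBt c 1 (tofrac s0)^-1 (tofrac s0).
  by rewrite tc0 mul0r mulr1 mulVf // => <-.
have [u [u0 hu]] := B_tors tBt tc1.
have psi0 q : psi 0 q = 0.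
  by apply: (@addrI _ (psi 0 q)); rewrite -psiA // !addr0.
have psic : psi c p = 0.
  have := psiM (phi u) c Lc p; rewrite hu psi0 (psiD _ Lc).2 => /esym/eqP.
  by rewrite mulf_eq0 tofrac_eq0 (negbTE u0) /= => /eqP.
move: psic; rewrite /c psiA // psiM // (psiD _ Lb).2 psiM //.
rewrite /rmul scaleN1r (inDN _ (psiD _ Lba0)) psiM // => /eqP.
rewrite subr_eq0 => /eqP <-; by rewrite mulrA mulVf // mul1r.
Qed.
End Baer.

Section Ext.
Variables (R : idomainType) (A : pzRingType) (phi : {rmorphism R -> A}).
Hypothesis phi_central : forall r a, phi r * a = a * phi r.
Variable (P : lmodType A^c).
Variables (B : pzRingType) (tB : A -> {fraction R} -> B).
Hypothesis tBt : is_tensor_frac_ring phi tB.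
Hypothesis Bss : semisimple_ring B.
Variables (N1 N2 : lmodType A) (iota : {linear N1 -> N2}).
Hypothesis iota_inj : injective iota.

Local Notation F := {fraction R}.
Local Notation inD := (@inD R A phi P).

Variable psi1 : N1 -> P -> F.
Hypothesis psi1D : forall n, inD (psi1 n).
Hypothesis psi1A : forall n n' p, psi1 (n + n') p = psi1 n p + psi1 n' p.
Hypothesis psi1M : forall a n p, psi1 (a *: n) p = psi1 n (rmul p a).

Definition fadd (f g : P -> F) := fun p => f p + g p.
Definition fact (a : A) (f : P -> F) := fun p => f (rmul p a).

Definition Good (G : set (N2 * (P -> F))) :=
  [/\ (forall m f f', G (m, f) -> G (m, f') -> f = f'),
      (forall m f, G (m, f) -> inD f),
      (forall m f m' f', G (m, f) -> G (m', f') -> G (m + m', fadd f f')) &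
      (forall a m f, G (m, f) -> G (a *: m, fact a f))].

Definition G0 : set (N2 * (P -> F)) := fun x => exists n, x = (iota n, psi1 n).

Lemma Good0 : Good G0.
Proof.
split.
- move=> m f f' [n [-> ->]] [n' [/iota_inj -> ->]] //.
- by move=> m f [n [_ ->]].
- move=> m f m' f' [n [-> ->]] [n' [-> ->]]; exists (n + n').
  by rewrite linearD; congr pair; apply: funext => p; rewrite psi1A.
- move=> a m f [n [-> ->]]; exists (a *: n).
  by rewrite linearZ; congr pair; apply: funext => p; rewrite psi1M.
Qed.


Local Notation T := (N2 * (P -> F))%type.

Lemma two (Fm : set (set T)) (X0 : set T) : Fm X0 ->
  (forall X, Fm X -> Good (setU G0 X)) -> total_on Fm subset ->
  forall x x', setU G0 (bigcup Fm id) x -> setU G0 (bigcup Fm id) x' ->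
  exists H, [/\ Good H, H x, H x' & forall z, H z -> setU G0 (bigcup Fm id) z].
Proof.
move=> FX0 FG tot x x' hx hx'.
have sub X : Fm X -> forall z, setU G0 X z -> setU G0 (bigcup Fm id) z.
  by move=> FX z [h|h]; [left|right; exists X].
have [X [FX hxX hx'X]] : exists X, [/\ Fm X, setU G0 X x & setU G0 X x'].
  case: hx => [h|[X FX h]]; case: hx' => [h'|[X' FX' h']].
  - by exists X0; split => //; left.
  - by exists X'; split => //; [left|right].
  - by exists X; split => //; [right|left].
  - have [XX'|X'X] := tot X X' FX FX'.
      by exists X'; split => //; right => //; apply: XX'.
    by exists X; split => //; right => //; apply: X'X.
by exists (setU G0 X); split => //; [exact: FG | exact: sub].
Qed.

Lemma chain_ok (Fm : set (set T)) :
  (forall X, Fm X -> Good (setU G0 X)) -> total_on Fm subset ->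
  Good (setU G0 (bigcup Fm id)).
Proof.
move=> FG tot.
case: (pselect (exists X, Fm X)) => [[X0 FX0]|F0]; last first.
  have -> : setU G0 (bigcup Fm id) = G0.
    apply: funext => z; apply: propext; split; last by left.
    by case=> // -[X FX _]; case: F0; exists X.
  exact: Good0.
have tw := two FX0 FG tot.
split.
- move=> m f f' h h'; have [H [[Hf _ _ _] hH hH' _]] := tw _ _ h h'; exact: Hf hH hH'.
- move=> m f h; have [H [[_ Hd _ _] hH _ _]] := tw _ _ h h; exact: Hd hH.
- move=> m f m' f' h h'; have [H [[_ _ Ha _] hH hH' sub]] := tw _ _ h h'.
  exact/sub/Ha.
- move=> a m f h; have [H [[_ _ _ Hm] hH _ sub]] := tw _ _ h h; exact/sub/Hm.
Qed.


Lemma extend : exists Psi : N2 -> P -> F,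
  [/\ (forall m, inD (Psi m)),
      (forall m m' p, Psi (m + m') p = Psi m p + Psi m' p),
      (forall a m p, Psi (a *: m) p = Psi m (rmul p a)) &
      (forall n p, Psi (iota n) p = psi1 n p)].
Proof.
have [Am [PA maxA]] := @Zorn_bigcup _ (fun X => Good (setU G0 X)) chain_ok.
pose G := setU G0 Am.
have GG : Good G := PA.
have G0G z : G0 z -> G z by left.
case: (GG) => Gf Gd Ga Gm.
have tot : forall m, exists f, G (m, f).
  move=> y; case: (pselect (exists f, G (y, f))) => // ny; exfalso.
  pose L a := exists f, G (a *: y, f).
  pose psi a := if pselect (L a) is left h then projT1 (cid h) else (fun _ : P => 0 : F).
  have psiP a : L a -> G (a *: y, psi a).
    by move=> h; rewrite /psi; case: (pselect (L a)) => [h'|//]; exact: projT2 (cid h').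
  have L0 : L 0.
    by exists (psi1 0); rewrite scale0r; apply: G0G; exists 0; rewrite linear0.
  have LD x x' : L x -> L x' -> L (x + x').
    by move=> [f hf] [f' hf']; exists (fadd f f'); rewrite scalerDl; exact: Ga.
  have LM a x : L x -> L (a * x).
    by move=> [f hf]; exists (fact a f); rewrite -scalerA; exact: Gm.
  have psiD b : L b -> inD (psi b) by move=> Lb; exact: Gd (psiP _ Lb).
  have psiA b b' : L b -> L b' -> forall p, psi (b + b') p = psi b p + psi b' p.
    move=> Lb Lb' p; have := Ga _ _ _ _ (psiP _ Lb) (psiP _ Lb').
    by rewrite -scalerDl => h; rewrite (Gf _ _ _ (psiP _ (LD _ _ Lb Lb')) h).
  have psiM a b : L b -> forall p, psi (a * b) p = psi b (rmul p a).
    move=> Lb p; have := Gm a _ _ (psiP _ Lb).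
    by rewrite scalerA => h; rewrite (Gf _ _ _ (psiP _ (LM a _ Lb)) h).
  have [d [dD dP]] := baer tBt Bss L0 LD LM psiD psiA psiM.
  pose G' : set T := fun x => exists s f a, G (s, f) /\ x = (s + a *: y, fadd f (fact a d)).
  have GG' z : G z -> G' z.
    case: z => s f hs; exists s, f, 0; split => //.
    rewrite scale0r addr0; congr pair; apply: funext => p.
    by rewrite /fadd /fact rmul0 (inD0 dD) addr0.
  have Gy : G' (y, fadd (psi1 0) (fact 1 d)).
    exists (iota 0), (psi1 0), 1; split; first by apply: G0G; exists 0.
    by rewrite linear0 add0r scale1r.
  have GoodG' : Good G'.
    split.
    - move=> m f1 f2 [s [f [a [hs e]]]] [s' [f' [a' [hs' e']]]].
      case: e => em ->; case: e' => em' ->.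
      have hc := Ga _ _ _ _ hs (Gm (-1) _ _ hs').
      have e2 : s + (-1) *: s' = (a' - a) *: y.
        have hs1 : s = m - a *: y by rewrite em addrK.
        have hs2 : s' = m - a' *: y by rewrite em' addrK.
        by rewrite hs1 hs2 scaleN1r scalerBl opprB addrC addrA subrK.
      rewrite e2 in hc.
      have La : L (a' - a) by exists (fadd f (fact (-1) f')).
      have hpsi := Gf _ _ _ (psiP _ La) hc.
      apply: funext => p; have := dP _ La p; rewrite hpsi /fadd /fact.
      rewrite /rmul scaleN1r (inDN _ (Gd _ _ hs')) -/(rmul p _) rmulDl.
      rewrite dD.1 /rmul scaleNr (inDN _ dD) -!/(rmul p _) => h.
      have -> : f p = f' p + (d (rmul p a') - d (rmul p a)) by rewrite -h addrC subrK.
      by rewrite -addrA subrK.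
    - by move=> m f1 [s [f [a [hs [_ ->]]]]]; exact: inD_add (Gd _ _ hs) (inD_act phi_central a dD).
    - move=> m f1 m' f2 [s [f [a [hs [-> ->]]]]] [s' [f' [a' [hs' [-> ->]]]]].
      exists (s + s'), (fadd f f'), (a + a'); split; first exact: Ga.
      rewrite scalerDl addrACA; congr pair; apply: funext => p.
      by rewrite /fadd /fact rmulDl dD.1 addrACA.
    - move=> b m f1 [s [f [a [hs [-> ->]]]]].
      exists (b *: s), (fact b f), (b * a); split; first exact: Gm.
      rewrite scalerDr scalerA; congr pair; apply: funext => p.
      by rewrite /fadd /fact rmul_mul.
  apply: (maxA G').
    split; first by move=> z hz; apply: GG'; right.
    by move=> /(_ _ Gy) hA; apply: ny; exists (fadd (psi1 0) (fact 1 d)); right.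
  have -> : setU G0 G' = G' .
    apply: funext => z; apply: propext; split; last by right.
    by case=> // h; apply: GG'; left.
  exact: GoodG'.
pose Psi m := projT1 (cid (tot m)).
have PsiP m : G (m, Psi m) := projT2 (cid (tot m)).
exists Psi; split.
- by move=> m; exact: Gd (PsiP m).
- by move=> m m' p; rewrite (Gf _ _ _ (PsiP (m + m')) (Ga _ _ _ _ (PsiP m) (PsiP m'))).
- by move=> a m p; rewrite (Gf _ _ _ (PsiP (a *: m)) (Gm a _ _ (PsiP m))).
- move=> n p; have h : G (iota n, psi1 n) by apply: G0G; exists n.
  by rewrite (Gf _ _ _ (PsiP (iota n)) h).
Qed.

End Ext.

Section Coord.
Variables (R : idomainType) (T1 : lmodType R) (I : eqType) (e : I -> T1).
Hypothesis span : forall x : T1, exists (l : seq I) (c : I -> R), x = \sum_(i <- l) c i *: e i.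
Hypothesis indep : forall (l : seq I) (c : I -> R), uniq l ->
  \sum_(i <- l) c i *: e i = 0 -> forall i, i \in l -> c i = 0.

Definition C (l : seq I) (c : I -> R) k := \sum_(i <- l | i == k) c i.

Lemma C_notin l c k : k \notin l -> C l c k = 0.
Proof.
elim: l => [|j l IH]; first by rewrite /C big_nil.
rewrite in_cons negb_or => /andP [kj kl]; rewrite /C big_cons eq_sym (negbTE kj).
exact: IH.
Qed.

Lemma C_uniq m c k : uniq m -> C m c k = if k \in m then c k else 0.
Proof.
elim: m => [|j m IH]; first by rewrite /C big_nil.
move=> /= /andP [jm um]; rewrite /C big_cons in_cons.
have [<-|jk] := eqVneq j k.
  by rewrite /= ?eqxx /=; have := C_notin c jm; rewrite /C => ->; rewrite addr0.
by rewrite /=; have := IH um; rewrite /C => ->.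
Qed.

Lemma pick1 (m : seq I) i (c : R) : uniq m -> i \in m ->
  \sum_(k <- m) (if i == k then c else 0) *: e k = c *: e i.
Proof.
elim: m => [|j m IH] //= /andP [jm um]; rewrite in_cons big_cons.
have [->|ij] := eqVneq i j.
  move=> _; rewrite big1_seq ?addr0 // => k /andP [_ km].
  by case: eqP => [ek|]; [rewrite ek km in jm | rewrite scale0r].
by rewrite /= scale0r add0r => /IH ->.
Qed.

Lemma regroup l c m : uniq m -> {subset l <= m} ->
  \sum_(i <- l) c i *: e i = \sum_(k <- m) C l c k *: e k.
Proof.
move=> um; elim: l => [|i l IH] sub.
  by rewrite big_nil big1 // => k _; rewrite /C big_nil scale0r.
rewrite big_cons IH; last by move=> x xl; apply: sub; rewrite in_cons xl orbT.
transitivity (\sum_(k <- m) ((if i == k then c i else 0) *: e k + C l c k *: e k)).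
  by rewrite big_split /= pick1 // sub // in_cons eqxx.
apply: eq_bigr => k _; rewrite /C big_cons /=.
by case: eqP => _; rewrite ?scale0r ?add0r // scalerDl.
Qed.

Lemma C_unique l c l' c' k :
  \sum_(i <- l) c i *: e i = \sum_(i <- l') c' i *: e i -> C l c k = C l' c' k.
Proof.
move=> eq; pose m := undup (l ++ l').
have um : uniq m by exact: undup_uniq.
have sl : {subset l <= m} by move=> x xl; rewrite mem_undup mem_cat xl.
have sl' : {subset l' <= m} by move=> x xl; rewrite mem_undup mem_cat xl orbT.
have : \sum_(k <- m) (C l c k - C l' c' k) *: e k = 0.
  rewrite (eq_bigr (fun k => C l c k *: e k - C l' c' k *: e k)); last first.
    by move=> k0 _; rewrite scalerBl.
  by rewrite sumrB -regroup // -regroup // eq subrr.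
move/(indep um) => h.
case km : (k \in m); first by apply/eqP; rewrite -subr_eq0; apply/eqP/h.
have kl : k \notin l by apply: contraFN km; exact: sl.
have kl' : k \notin l' by apply: contraFN km; exact: sl'.
by rewrite !C_notin.
Qed.

Lemma span2 x : exists lc : seq I * (I -> R), x = \sum_(i <- lc.1) lc.2 i *: e i.
Proof. by have [l [c h]] := span x; exists (l, c). Qed.

Definition crd k x := let lc := projT1 (cid (span2 x)) in C lc.1 lc.2 k.

Lemma crdE x l c k : x = \sum_(i <- l) c i *: e i -> crd k x = C l c k.
Proof.
move=> xE; rewrite /crd; case: (cid (span2 x)) => lc /= h.
by apply: C_unique; rewrite -h.
Qed.

Lemma crdD k x y : crd k (x + y) = crd k x + crd k y.
Proof.
have [l [c xE]] := span x; have [l' [c' yE]] := span y.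
pose m := undup (l ++ l').
have um : uniq m by exact: undup_uniq.
have sl : {subset l <= m} by move=> z zl; rewrite mem_undup mem_cat zl.
have sl' : {subset l' <= m} by move=> z zl; rewrite mem_undup mem_cat zl orbT.
rewrite (crdE k xE) (crdE k yE).
rewrite (@crdE _ m (fun k => C l c k + C l' c' k)); last first.
  rewrite xE yE (regroup _ um sl) (regroup _ um sl') -big_split /=.
  by apply: eq_bigr => i _; rewrite scalerDl.
rewrite C_uniq //; case km : (k \in m) => //.
have kl : k \notin l by apply: contraFN km; exact: sl.
have kl' : k \notin l' by apply: contraFN km; exact: sl'.
by rewrite !C_notin // addr0.
Qed.

Lemma crdZ k r x : crd k (r *: x) = r * crd k x.
Proof.
have [l [c xE]] := span x; rewrite (crdE k xE).
rewrite (@crdE _ l (fun i => r * c i)); last first.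
  by rewrite xE scaler_sumr; apply: eq_bigr => i _; rewrite scalerA.
by rewrite /C mulr_sumr.
Qed.

Lemma crd0 x : (forall k, crd k x = 0) -> x = 0.
Proof.
move=> h; have [l [c xE]] := span x.
rewrite xE (@regroup l c (undup l)) ?undup_uniq //; last by move=> z; rewrite mem_undup.
by rewrite big1 // => k _; rewrite -(crdE k xE) h scale0r.
Qed.

End Coord.

Unset Implicit Arguments.

Theorem mainTheorem6
  (R : idomainType)
  (A : pzRingType) (phi : {rmorphism R -> A})
  (phi_central : forall r a, phi r * a = a * phi r)
  (P : lmodType A^c)
  (N1 N2 : lmodType A) (iota : {linear N1 -> N2}) (iota_inj : injective iota)
  (B : pzRingType) (tB : A -> {fraction R} -> B)
  (tB_tensor : is_tensor_frac_ring phi tB)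
  (B_semisimple : semisimple_ring B)
  (T1 : lmodType R) (t1 : P -> N1 -> T1) (t1_tensor : is_tensorA t1)
  (t1_R : forall r p n, t1 (rmul p (phi r)) n = r *: t1 p n)
  (T2 : lmodType R) (t2 : P -> N2 -> T2) (t2_tensor : is_tensorA t2)
  (t2_R : forall r p n, t2 (rmul p (phi r)) n = r *: t2 p n)
  (N2_free : free_wrt (fun (r : R) (n : N2) => phi r *: n))
  (T1_free : free_wrt (@GRing.scale R T1)) :
  forall f : T1 -> T2, {morph f : x y / x + y} ->
    (forall p n, f (t1 p n) = t2 p (iota n)) -> injective f.
Proof.
move=> f fadd ft x y fxy.
have [I [e [span indep]]] := T1_free.
case: t1_tensor => [[b1p b1n b1a] _ uq1].
case: t2_tensor => _ ex2 _.
pose z := x - y.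
have f0 : f 0 = 0 by apply: (@addrI _ (f 0)); rewrite -fadd !addr0.
have fz : f z = 0.
  have : f z + f y = f x by rewrite -fadd subrK.
  by rewrite fxy => /(congr1 (fun w => w - f y)); rewrite addrK subrr.
suff : z = 0 by move/eqP; rewrite subr_eq0 => /eqP.
apply: (@crd0 _ _ _ _ span indep) => k.
pose lam t := tofrac (crd span k t).
have lamD t t' : lam (t + t') = lam t + lam t' by rewrite /lam crdD // tofracD.
have lamZ r t : lam (r *: t) = tofrac r * lam t by rewrite /lam crdZ // tofracM.
pose psi1 n p := lam (t1 p n).
have psi1D n : inD phi (psi1 n).
  split => [p p'|r p]; first by rewrite /psi1 b1p lamD.
  by rewrite /psi1 t1_R lamZ.
have psi1A n n' p : psi1 (n + n') p = psi1 n p + psi1 n' p by rewrite /psi1 b1n lamD.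
have psi1M a n p : psi1 (a *: n) p = psi1 n (rmul p a) by rewrite /psi1 b1a.
have [Psi [PsiD PsiA PsiM Psii]] :=
  extend phi_central tB_tensor B_semisimple iota_inj psi1D psi1A psi1M.
have bal : balanced (fun p m => Psi m p).
  split => [p p' m|p m m'|p a m]; [exact: (PsiD m).1 | exact: PsiA | by rewrite PsiM].
have [h [hadd hE]] := ex2 _ _ bal.
have h0 : h 0 = 0 by apply: (@addrI _ (h 0)); rewrite -hadd !addr0.
have e1 := uq1 _ lam (fun t => h (f t)) lamD _ _ z.
have : lam z = 0.
  rewrite e1 ?fz ?h0 //.
  - by move=> t t'; rewrite fadd hadd.
  - by move=> p n; rewrite ft hE Psii.
by move/eqP; rewrite tofrac_eq0 => /eqP.
Qed.
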